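(* Let $I\in\mathbb{I}_{m,n}$ be written in staircase form $I=\bigsqcup_{i=s}^t[b_i,d_i]_i$. Let $C$ be the set of full subquivers of $G_{m,n}$ with vertex set $I_0\cup\{v\}$, where $v$ is a vertex of $G_{m,n}$ (i.e. lies within the grid) of one of the following forms: (1) $v=(j,b_j-1)$ for some $j\in\{s,\dots,t\}$; (2) $v=(j,d_j+1)$ for some $j\in\{s,\dots,t\}$; (3) $v=(t+1,b_t)$; (4) $v=(s-1,d_s)$. Then $\mathrm{Cov}(I)=C\cap\mathbb{I}_{m,n}$.
   Context: For integers $m,n\ge1$, $G_{m,n}$ is the equioriented commutative $m\times n$ grid: the quiver with vertex set $\{(i,j):1\le i\le m,\ 1\le j\le n\}$ and arrows $(i,j)\to(i,j+1)$ and $(i,j)\to(i+1,j)$, bound by all commutativity relations. An interval of $G_{m,n}$ is a nonempty full subquiver $I$ which is connected (as an undirected graph) and convex (whenever $x,y\in I_0$ and there are paths $x\to z$ and $z\to y$ in $G_{m,n}$, then $z\in I_0$); $I_0$ denotes its vertex set. $\mathbb{I}_{m,n}$ is the set of intervals, partially ordered by $I\le J\iff I_0\subseteq J_0$; $\mathrm{Cov}(I)$ is the set of $J\in\mathbb{I}_{m,n}$ covering $I$. Staircase form: every $I\in\mathbb{I}_{m,n}$ can be written as $\bigsqcup_{i=s}^t[b_i,d_i]_i$ with $1\le s\le t\le m$, $1\le b_i\le d_i\le n$ and $b_{i+1}\le b_i\le d_{i+1}\le d_i$ for $s\le i<t$, meaning $I_0=\{(i,x): s\le i\le t,\ b_i\le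 x\le d_i\}$. *)

(* Defs.v *)
(* Vertices of G_{m,n} are pairs (i,j) : nat * nat with
   1 <= i <= m, 1 <= j <= n (1-indexed, as in the paper).
   A full subquiver of G_{m,n} is determined by its vertex set, so we
   represent full subquivers by their vertex sets  S : nat * nat -> Prop. *)
From Stdlib Require Import Arith Lia.

Definition vset := nat * nat -> Prop.

Definition in_grid (m n : nat) (x : nat * nat) : Prop :=
  1 <= fst x <= m /\ 1 <= snd x <= n.

Definition arrow (m n : nat) (x y : nat * nat) : Prop :=
  in_grid m n x /\ in_grid m n y /\
  ((fst y = fst x /\ snd y = S (snd x)) \/ (fst y = S (fst x) /\ snd y = snd x)).

Inductive reach (m n : nat) : nat * nat -> nat * nat -> Prop :=
| reach_refl x : in_grid m n x -> reach m n x x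
| reach_step x y z : arrow m n x y -> reach m n y z -> reach m n x z.

Inductive uconn (m n : nat) (I : vset) : nat * nat -> nat * nat -> Prop :=
| uconn_refl x : I x -> uconn m n I x x
| uconn_step x y z : I x -> I y -> (arrow m n x y \/ arrow m n y x) ->
    uconn m n I y z -> uconn m n I x z.

Definition is_interval (m n : nat) (I : vset) : Prop :=
  (forall x, I x -> in_grid m n x) /\
  (exists x, I x) /\
  (forall x y, I x -> I y -> uconn m n I x y) /\
  (forall x y z, I x -> I y -> reach m n x z -> reach m n z y -> I z).

Definition subset (I J : vset) : Prop := forall x, I x -> J x.

Definition strict_subset (I J : vset) : Prop := subset I J /\ ~ subset J I.

Definition covers (m n : nat) (I J : vset) : Prop :=
  is_interval m n J /\ strict_subset I J /\
  ~ (exists K, is_interval m n K /\ strict_subset I K /\ strict_subset K J).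

Definition staircase (m n : nat) (I : vset) (s t : nat) (b d : nat -> nat) : Prop :=
  1 <= s <= t /\ t <= m /\
  (forall i, s <= i <= t -> 1 <= b i /\ b i <= d i /\ d i <= n) /\
  (forall i, s <= i < t -> b (S i) <= b i /\ b i <= d (S i) /\ d (S i) <= d i) /\
  (forall x, I x <-> (s <= fst x <= t /\ b (fst x) <= snd x <= d (fst x))).

Definition admissible_vertex (m n : nat) (s t : nat) (b d : nat -> nat)
    (v : nat * nat) : Prop :=
  in_grid m n v /\
  ((exists j, s <= j <= t /\ v = (j, b j - 1)) \/
   (exists j, s <= j <= t /\ v = (j, S (d j))) \/
   v = (S t, b t) \/
   v = (s - 1, d s)).

(* Main.v *)
Require Import Defs.
From Stdlib Require Import Arith Lia.
From Stdlib Require Import Classical.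

Lemma reach_le m n x y : reach m n x y ->
  in_grid m n x /\ in_grid m n y /\ fst x <= fst y /\ snd x <= snd y.
Proof.
  induction 1 as [x Hx | x y z Hxy _ IH].
  - refine (conj Hx (conj Hx (conj _ _))); lia.
  - destruct Hxy as [Hx [Hy Hc]]. destruct IH as [_ [Hz [H1 H2]]].
    refine (conj Hx (conj Hz (conj _ _))); destruct Hc as [[E1 E2]|[E1 E2]]; lia.
Qed.

Lemma le_reach m n : forall k x y, (fst y - fst x) + (snd y - snd x) = k ->
  in_grid m n x -> in_grid m n y -> fst x <= fst y -> snd x <= snd y -> reach m n x y.
Proof.
  induction k as [|k IH]; intros [a c] [a' c'] Hk Hx Hy H1 H2; simpl in *.
  - assert (a = a') by lia; assert (c = c') by lia; subst. now constructor.
  - unfold in_grid in *; simpl in *.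
    destruct (Nat.lt_ge_cases a a') as [Ha|Ha].
    + apply reach_step with (S a, c).
      * unfold arrow, in_grid; simpl; lia.
      * apply IH; unfold in_grid; simpl; lia.
    + apply reach_step with (a, S c).
      * unfold arrow, in_grid; simpl; lia.
      * apply IH; unfold in_grid; simpl; lia.
Qed.

Lemma le_reach' m n x y : in_grid m n x -> in_grid m n y -> fst x <= fst y -> snd x <= snd y -> reach m n x y.
Proof. apply (le_reach m n _ x y eq_refl). Qed.

Lemma reach_trans m n x y z : reach m n x y -> reach m n y z -> reach m n x z.
Proof. induction 1; intros; auto. eapply reach_step; eauto. Qed.

Lemma uconn_trans m n I x y z : uconn m n I x y -> uconn m n I y z -> uconn m n I x z.
Proof. induction 1; intros; auto. eapply uconn_step; eauto. Qed.

Lemma uconn_sym m n I x y : uconn m n I x y -> uconn m n I y x.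
Proof.
  induction 1. constructor; auto. apply uconn_trans with y; auto.
  apply uconn_step with x; auto. tauto. constructor; auto.
Qed.

Lemma uconn_mono m n (I K : vset) x y : (forall z, I z -> K z) -> uconn m n I x y -> uconn m n K x y.
Proof. intros HIK; induction 1; [constructor|eapply uconn_step]; eauto. Qed.

Lemma edge m n (I J : vset) x y : uconn m n J x y -> I x -> ~ I y ->
  exists a c, I a /\ J c /\ ~ I c /\ (arrow m n a c \/ arrow m n c a).
Proof.
  induction 1 as [x Hx|x y z Hx Hy Ha Hu IH]; intros HIx HIy.
  - contradiction.
  - destruct (classic (I y)) as [Hy'|Hy'].
    + apply IH; auto.
    + exists x, y; tauto.
Qed.

Lemma min_exists (P : nat*nat -> Prop) (f : nat*nat -> nat) :
  (exists w, P w) -> exists w, P w /\ forall z, P z -> f w <= f z.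
Proof.
  intros [w Hw].
  assert (H : forall k w, f w <= k -> P w -> exists w, P w /\ forall z, P z -> f w <= f z).
  { induction k as [|k IH]; intros w0 Hk Hw0.
    - exists w0; split; auto; intros; lia.
    - destruct (classic (exists z, P z /\ f z < f w0)) as [[z [Hz Hlt]]|Hn].
      + apply (IH z); auto; lia.
      + exists w0; split; auto; intros z Hz.
        destruct (Nat.le_gt_cases (f w0) (f z)); auto. exfalso; apply Hn; eauto. }
  eapply H; eauto.
Qed.
Lemma up m n (I J : vset) s t b d (w x : nat*nat) :
  staircase m n I s t b d -> is_interval m n I -> is_interval m n J ->
  (forall y, I y -> J y) -> J w -> ~ I w -> I x -> reach m n x w ->
  (forall z, J z -> ~ I z -> (exists x, I x /\ reach m n x z) -> fst w + snd w <= fst z + snd z) ->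
  admissible_vertex m n s t b d w /\ is_interval m n (fun y => I y \/ y = w).
Proof.
  intros Hst HI HJ HIJ Jw nIw Ix Hxw Hmin.
  destruct Hst as [Hs [Ht [Hbd [Hmono HIe]]]].
  destruct HI as [HIg [_ [HIu HIc]]].
  destruct HJ as [HJg [_ [_ HJc]]].
  pose proof (reach_le _ _ _ _ Hxw) as [Hxg [Hwg [Hx1 Hx2]]].
  assert (Hbet: forall z y, in_grid m n z -> I y -> fst y <= fst z -> snd y <= snd z ->
            fst z <= fst w -> snd z <= snd w -> z <> w -> I z).
  { intros z y Hz Iy H1 H2 H3 H4 Hne.
    destruct (classic (I z)) as [Hiz|Hiz]; auto. exfalso.
    assert (Jz: J z).
    { apply (HJc y w z (HIJ y Iy) Jw); apply le_reach'; auto. }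
    specialize (Hmin z Jz Hiz (ex_intro _ y (conj Iy (le_reach' _ _ _ _ (HIg y Iy) Hz H1 H2)))).
    apply Hne. destruct z as [z1 z2], w as [w1 w2]; simpl in *; f_equal; lia. }
  assert (Hp: exists p, I p /\ arrow m n p w /\ admissible_vertex m n s t b d w).
  { destruct w as [a c], x as [x1 x2]. unfold in_grid in *; simpl in *.
    assert (Hnw: ~ (s <= a <= t /\ b a <= c <= d a)).
    { intro H; apply nIw, HIe; simpl; exact H. }
    destruct (Nat.lt_ge_cases x2 c) as [Hc|Hc].
    - assert (Ip: I (a, c-1)).
      { apply (Hbet (a,c-1) (x1,x2)); simpl; try lia; auto. intro E; injection E; lia. }
      pose proof Ip as Ip'. apply HIe in Ip'; simpl in Ip'.
      exists (a, c-1). split; auto. split. unfold arrow, in_grid; simpl; lia.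
      split. unfold in_grid; simpl; lia. right; left. exists a. split; [lia|]. f_equal; lia.
    - assert (x2 = c) by lia. subst x2.
      assert (x1 < a) by (destruct (Nat.eq_dec x1 a); [subst; congruence|lia]).
      assert (Ip: I (a-1, c)).
      { apply (Hbet (a-1,c) (x1,c)); simpl; try lia; auto. intro E; injection E; lia. }
      pose proof Ip as Ip'. apply HIe in Ip'; simpl in Ip'.
      exists (a-1,c). split; auto. split; [unfold arrow, in_grid; simpl; lia|].
      split; [unfold in_grid; simpl; lia|].
      destruct (Nat.eq_dec (a-1) t) as [Ha|Ha].
      + rewrite Ha in Ip'.
        assert (Hbt := Hbd t ltac:(lia)).
        assert (c = b t).
        { destruct (Nat.eq_dec c (b t)); auto. exfalso.
          assert (Iz: I (a, c-1)).
          { apply (Hbet (a,c-1) (t, b t)); simpl; try lia.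
            apply HIe; simpl; lia. intro E; injection E; lia. }
          apply HIe in Iz; simpl in Iz; lia. }
        right; right; left. f_equal; lia.
      + assert (Hm := Hmono (a-1) ltac:(lia)).
        replace (S (a-1)) with a in Hm by lia.
        assert (Hb := Hbd a ltac:(lia)).
        assert (c = S (d a)).
        { destruct (Nat.eq_dec c (S (d a))); auto; exfalso.
          assert (Iz: I (a, c-1)).
          { apply (Hbet (a, c-1) (a, d a)); simpl; try lia.
            apply HIe; simpl; lia. intro E; injection E; lia. }
          apply HIe in Iz; simpl in Iz; lia. }
        right; left; exists a; split; [lia|]; f_equal; lia. }
  destruct Hp as [p [Ip [Hpw Hadm]]].
  split; [exact Hadm|].
  split. { intros y [Hy|Hy]; [apply HIg; auto|subst; auto]. }
  split. { exists w; auto. }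
  split.
  { assert (Hc: forall y, I y \/ y = w -> uconn m n (fun y => I y \/ y = w) y p /\ uconn m n (fun y => I y \/ y = w) p y).
    { intros y [Hy|Hy].
      - split; apply uconn_mono with I; try (intros; left; auto); apply HIu; auto.
      - subst y. assert (H: uconn m n (fun y => I y \/ y = w) w p).
        { apply uconn_step with p; [right; reflexivity | left; exact Ip | right; exact Hpw | apply uconn_refl; left; exact Ip]. }
        split; auto. apply uconn_sym; auto. }
    intros y z Hy Hz. apply uconn_trans with p; [apply Hc|apply Hc]; auto. }
  { intros y1 y2 z Hy1 Hy2 H1 H2.
    destruct Hy1 as [Hy1|Hy1], Hy2 as [Hy2|Hy2].
    - left; apply (HIc y1 y2 z); auto.
    - subst y2. destruct (classic (z = w)) as [E|E]; [right; exact E|left].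
      apply reach_le in H1; apply reach_le in H2. apply (Hbet z y1); tauto.
    - subst y1. left. apply (HIc x y2 z Ix Hy2); auto. apply reach_trans with w; auto.
    - subst y1 y2. right. apply reach_le in H1; apply reach_le in H2.
      destruct z, w; simpl in *; f_equal; lia. }
Qed.
Lemma down m n (I J : vset) s t b d (w x : nat*nat) :
  staircase m n I s t b d -> is_interval m n I -> is_interval m n J ->
  (forall y, I y -> J y) -> J w -> ~ I w -> I x -> reach m n w x ->
  (forall z, J z -> ~ I z -> (exists x, I x /\ reach m n z x) -> fst z + snd z <= fst w + snd w) ->
  admissible_vertex m n s t b d w /\ is_interval m n (fun y => I y \/ y = w).
Proof.
  intros Hst HI HJ HIJ Jw nIw Ix Hxw Hmin.
  destruct Hst as [Hs [Ht [Hbd [Hmono HIe]]]].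
  destruct HI as [HIg [_ [HIu HIc]]].
  destruct HJ as [HJg [_ [_ HJc]]].
  pose proof (reach_le _ _ _ _ Hxw) as [Hwg [Hxg [Hx1 Hx2]]].
  assert (Hbet: forall z y, in_grid m n z -> I y -> fst z <= fst y -> snd z <= snd y ->
            fst w <= fst z -> snd w <= snd z -> z <> w -> I z).
  { intros z y Hz Iy H1 H2 H3 H4 Hne.
    destruct (classic (I z)) as [Hiz|Hiz]; auto. exfalso.
    assert (Jz: J z).
    { apply (HJc w y z Jw (HIJ y Iy)); apply le_reach'; auto. }
    specialize (Hmin z Jz Hiz (ex_intro _ y (conj Iy (le_reach' _ _ _ _ Hz (HIg y Iy) H1 H2)))).
    apply Hne. destruct z as [z1 z2], w as [w1 w2]; simpl in *; f_equal; lia. }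
  assert (Hp: exists p, I p /\ arrow m n w p /\ admissible_vertex m n s t b d w).
  { destruct w as [a c], x as [x1 x2]. unfold in_grid in *; simpl in *.
    assert (Hnw: ~ (s <= a <= t /\ b a <= c <= d a)).
    { intro H; apply nIw, HIe; simpl; exact H. }
    destruct (Nat.lt_ge_cases c x2) as [Hc|Hc].
    - assert (Ip: I (a, S c)).
      { apply (Hbet (a,S c) (x1,x2)); simpl; try lia; auto. intro E; injection E; lia. }
      pose proof Ip as Ip'. apply HIe in Ip'; simpl in Ip'.
      assert (Hb := Hbd a ltac:(lia)).
      exists (a, S c). split; auto. split. unfold arrow, in_grid; simpl; lia.
      split. unfold in_grid; simpl; lia. left. exists a. split; [lia|]. f_equal; lia.
    - assert (x2 = c) by lia. subst x2.
      assert (a < x1) by (destruct (Nat.eq_dec x1 a); [subst; congruence|lia]).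
      assert (Ip: I (S a, c)).
      { apply (Hbet (S a,c) (x1,c)); simpl; try lia; auto. intro E; injection E; lia. }
      pose proof Ip as Ip'. apply HIe in Ip'; simpl in Ip'.
      exists (S a,c). split; auto. split; [unfold arrow, in_grid; simpl; lia|].
      split; [unfold in_grid; simpl; lia|].
      destruct (Nat.eq_dec (S a) s) as [Ha|Ha].
      + rewrite Ha in Ip'.
        assert (Hbt := Hbd s ltac:(lia)).
        assert (c = d s).
        { destruct (Nat.eq_dec c (d s)); auto. exfalso.
          assert (Iz: I (a, S c)).
          { apply (Hbet (a,S c) (s, d s)); simpl; try lia.
            apply HIe; simpl; lia. intro E; injection E; lia. }
          apply HIe in Iz; simpl in Iz; lia. }
        right; right; right. f_equal; lia.
      + assert (Hm := Hmono a ltac:(lia)).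
        assert (Hb := Hbd a ltac:(lia)).
        assert (S c = b a).
        { destruct (Nat.eq_dec (S c) (b a)); auto; exfalso.
          assert (Iz: I (a, S c)).
          { apply (Hbet (a, S c) (a, b a)); simpl; try lia.
            apply HIe; simpl; lia. intro E; injection E; lia. }
          apply HIe in Iz; simpl in Iz; lia. }
        left; exists a; split; [lia|]; f_equal; lia. }
  destruct Hp as [p [Ip [Hpw Hadm]]].
  split; [exact Hadm|].
  split. { intros y [Hy|Hy]; [apply HIg; auto|subst; auto]. }
  split. { exists w; auto. }
  split.
  { assert (Hc: forall y, I y \/ y = w -> uconn m n (fun y => I y \/ y = w) y p /\ uconn m n (fun y => I y \/ y = w) p y).
    { intros y [Hy|Hy].
      - split; apply uconn_mono with I; try (intros; left; auto); apply HIu; auto.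
      - subst y. assert (H: uconn m n (fun y => I y \/ y = w) w p).
        { apply uconn_step with p; [right; reflexivity | left; exact Ip | left; exact Hpw | apply uconn_refl; left; exact Ip]. }
        split; auto. apply uconn_sym; auto. }
    intros y z Hy Hz. apply uconn_trans with p; [apply Hc|apply Hc]; auto. }
  { intros y1 y2 z Hy1 Hy2 H1 H2.
    destruct Hy1 as [Hy1|Hy1], Hy2 as [Hy2|Hy2].
    - left; apply (HIc y1 y2 z); auto.
    - subst y2. left. apply (HIc y1 x z Hy1 Ix); auto. apply reach_trans with w; auto.
    - subst y1. destruct (classic (z = w)) as [E|E]; [right; exact E|left].
      apply reach_le in H1; apply reach_le in H2. apply (Hbet z y2); tauto.
    - subst y1 y2. right. apply reach_le in H1; apply reach_le in H2.
      destruct z, w; simpl in *; f_equal; lia. }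
Qed.

Theorem mainTheorem3 (m n : nat) (Hm : 1 <= m) (Hn : 1 <= n)
    (I : vset) (HI : is_interval m n I)
    (s t : nat) (b d : nat -> nat) (Hst : staircase m n I s t b d) :
  forall J : vset,
    covers m n I J <->
    (is_interval m n J /\
     exists v, admissible_vertex m n s t b d v /\
               (forall x, J x <-> (I x \/ x = v))).
Proof.
  intros J. split.
  - intros [HJ [[HIJ HnJI] Hno]].
    assert (Hex: exists y, J y /\ ~ I y).
    { apply NNPP; intro H; apply HnJI; intros y Hy; apply NNPP; intro; apply H; eauto. }
    destruct Hex as [y0 [Jy0 nIy0]].
    pose proof HI as [HIg [[x0 Ix0] [HIu HIc]]].
    pose proof HJ as [HJg [_ [HJu HJc]]].
    destruct (edge m n I J x0 y0 (HJu x0 y0 (HIJ x0 Ix0) Jy0) Ix0 nIy0) as [a [c [Ia [Jc [nIc Harr]]]]].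
    assert (Hv: exists v, J v /\ ~ I v /\ admissible_vertex m n s t b d v /\ is_interval m n (fun y => I y \/ y = v)).
    { destruct Harr as [Harr|Harr].
      - destruct (min_exists (fun z => J z /\ ~ I z /\ exists x, I x /\ reach m n x z) (fun z => fst z + snd z)) as [w [[Jw [nIw [x [Ix Hxw]]]] Hmin]].
        { exists c; split; auto; split; auto; exists a; split; auto.
          apply reach_step with c; auto. constructor; apply Harr. }
        exists w; split; auto; split; auto.
        apply (up m n I J s t b d w x); auto;
        intros z Jz nIz Hz; apply Hmin; auto.
      - destruct (min_exists (fun z => J z /\ ~ I z /\ exists x, I x /\ reach m n z x) (fun z => m + n - (fst z + snd z))) as [w [[Jw [nIw [x [Ix Hxw]]]] Hmin]].
        { exists c; split; auto; split; auto; exists a; split; auto.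
          apply reach_step with a; auto. constructor; apply Harr. }
        exists w; split; auto; split; auto.
        apply (down m n I J s t b d w x); auto.
        intros z Jz nIz Hz. specialize (Hmin z (conj Jz (conj nIz Hz))).
        pose proof (HJg z Jz); pose proof (HJg w Jw). unfold in_grid in *; lia. }
    destruct Hv as [v [Jv [nIv [Hadm HK]]]].
    split; [exact HJ|]. exists v; split; auto.
    assert (HJK: forall y, J y -> I y \/ y = v).
    { apply NNPP; intro H. apply Hno. exists (fun y => I y \/ y = v). split; auto. split.
      - split. intros y Hy; auto. intro H'; apply nIv; apply H'; auto.
      - split. intros y [Hy|Hy]; subst; auto. intro H'. apply H. intros y Hy; apply H'; auto. }
    intros y; split; auto. intros [Hy|Hy]; subst; auto.
  - intros [HJ [v [Hadm HJe]]].
    assert (nIv: ~ I v).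
    { destruct Hst as [_ [_ [_ [_ HIe]]]]. intro H; apply HIe in H.
      destruct Hadm as [Hg [[j [Hj E]]|[[j [Hj E]]|[E|E]]]]; subst; unfold in_grid in Hg; simpl in *; lia. }
    split; auto. split.
    + split. intros y Hy; apply HJe; auto. intro H; apply nIv, H, HJe; auto.
    + intros [K [HK [[HIK HnKI] [HKJ HnJK]]]]. apply HnJK. intros y Hy.
      apply HJe in Hy. destruct Hy as [Hy|Hy]; [auto|subst].
      apply NNPP; intro HnKv; apply HnKI; intros z Hz.
      destruct (proj1 (HJe z) (HKJ z Hz)) as [|E]; auto; subst; contradiction.
Qed.
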